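(* Let $G$ be a finite simple graph. Then for every simplex $\sigma$ of $\mathrm{M}(G)$ and every codimension-one face $\tau$ of $\sigma$ with $J(m_\tau)<J(m_\sigma)$ one has $J(m_\tau)=J(m_\sigma)-1$; thus $\partial_d$ has bidegree $(-1,-1)$ on $\widehat{C}(G)$. Moreover $\partial_d\circ\partial_d=0$, so $(\widehat{C}(G),\partial_d)$ is a chain complex.
   Context: A finite simple graph $G$ is regarded as a simplicial complex of dimension at most $1$; its face poset $\mathcal{F}(G)$ is the directed graph with vertices the vertices and edges of $G$ and a directed edge $e\to v$ whenever $v$ is an endpoint of the edge $e$. A matching on $\mathcal{F}(G)$ is a set $m$ of edges of $\mathcal{F}(G)$, no two sharing an endpoint. Given a matching $m$, let $\mathcal{F}_m(G)$ be obtained from $\mathcal{F}(G)$ by reversing every edge in $m$; a directed cycle of $\mathcal{F}_m(G)$ (closed directed path without repeated vertices) is supported by $m$, and $J(m)$ is the number of directed cycles supported by $m$. The matching complex $\mathrm{M}(G)$ has vertex set the edges of $\mathcal{F}(G)$ and simplices the nonempty matchings; $m_\sigma$ denotes the matching of a simplex $\sigma$. Let $\widehat{C}_i^j(G)$ be the $\mathbb{F}_2$-vector space with basis the $i$-dimensional simplices $\sigma$ of $\mathrm{M}(G)$ with $J(m_\sigma)=j$, and $\widehat{C}(G)=\bigoplus_{i,j}\widehat{C}_i^j(G)$. The simplicial boundary $\partial$ sends $\sigma$ to the mod-2 sum of its codimension-one faces. $\partial_J(\sigma)$ is the sum of those faces $\tau$ with $J(m_\tau)=J(m_\sigma)$,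 and $\partial_d=\partial-\partial_J$. *)

(* Defs.v *)
From mathcomp Require Import all_boot all_order all_algebra.
Set Implicit Arguments. Unset Strict Implicit. Unset Printing Implicit Defensive.
Import GRing.Theory.
Local Open Scope ring_scope.

Section FacePoset.
Variables (T : finType) (e : rel T).

Definition isEdge (s : {set T}) : bool :=
  [exists u, exists v, e u v && (s == [set u; v])].

(* vertices of the face poset F(G): vertices of G (inl) and edges of G (inr) *)
Definition node := (T + {set T})%type.

(* an edge s -> v of F(G) is represented by the pair (s, v), v an endpoint of s *)
Definition farc := ({set T} * T)%type.
Definition arc_ok (a : farc) : bool := isEdge a.1 && (a.2 \in a.1).

Definition matching (m : {set farc}) : bool :=
  [forall a in m, arc_ok a] &&
  [forall a in m, forall b in m, (a != b) ==> ((a.1 != b.1) && (a.2 != b.2))].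

Definition simplex (m : {set farc}) : bool := matching m && (m != set0).

(* directed edges of F_m(G): s -> v unless (s,v) in m, in which case v -> s *)
Definition dedge (m : {set farc}) (x y : node) : bool :=
  match x, y with
  | inr s, inl v => arc_ok (s, v) && ((s, v) \notin m)
  | inl v, inr s => arc_ok (s, v) && ((s, v) \in m)
  | _, _ => false
  end.

Definition joins (a : farc) (x y : node) : bool :=
  ((x == inr a.1) && (y == inl a.2)) || ((x == inl a.2) && (y == inr a.1)).

Definition cycle_arcs (p : seq node) : {set farc} :=
  [set a : farc | has (fun xy => joins a xy.1 xy.2) (zip p (rot 1 p))].

(* C is (the arc set of) a directed cycle supported by m: a closed directed
   path in F_m(G) without repeated vertices. *)
Definition is_dcycle (m : {set farc}) (C : {set farc}) : bool :=
  [exists n : 'I_(#|{: node}|.+1), exists t : n.-tuple node,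
     [&& (0 < n)%N, uniq t, cycle (dedge m) t & C == cycle_arcs t]].

Definition J (m : {set farc}) : nat := #|[set C : {set farc} | is_dcycle m C]|.

Definition codim1_face (tau sigma : {set farc}) : bool :=
  simplex sigma && simplex tau && [exists a in sigma, tau == sigma :\ a].

(* chains of \hat C(G): F_2-valued functions supported on simplices *)
Definition chain := {ffun {set farc} -> 'F_2}.
Definition is_chain (c : chain) : Prop := forall s, c s != 0 -> simplex s.

Definition bd_d (c : chain) : chain :=
  [ffun tau => \sum_(sigma | simplex sigma)
      c sigma * (codim1_face tau sigma && (J tau != J sigma))%:R].

End FacePoset.

(* Main.v *)
Require Import Defs.
From mathcomp Require Import all_boot all_order all_algebra.
Import GRing.Theory.
Local Open Scope ring_scope.
Set Implicit Arguments. Unset Strict Implicit. Unset Printing Implicit Defensive.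

Section Aux.
Variable X : eqType.

Definition Z (t : seq X) := zip t (rot 1 t).

Lemma path_rcons_zip (r : rel X) x p z :
  path r x (rcons p z) = all (fun xy => r xy.1 xy.2) (zip (x :: p) (rcons p z)).
Proof. by elim: p x => [|y p IH] x //=; rewrite IH. Qed.

Lemma cycle_Z (r : rel X) t : cycle r t = all (fun xy => r xy.1 xy.2) (Z t).
Proof. case: t => [|x p] //=; by rewrite /Z rot1_cons path_rcons_zip. Qed.

Lemma Z_fst t x y : (x, y) \in Z t -> x \in t.
Proof.
move=> H; have : x \in unzip1 (Z t) by apply/mapP; exists (x, y).
by rewrite /Z unzip1_zip // size_rot.
Qed.

Lemma Z_snd t x y : (x, y) \in Z t -> y \in t.
Proof.
move=> H; have : y \in unzip2 (Z t) by apply/mapP; exists (x, y).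
by rewrite /Z unzip2_zip ?size_rot // mem_rot.
Qed.

Lemma Z_pred t x : x \in t -> exists w, (w, x) \in Z t.
Proof.
rewrite -(mem_rot 1) -{1}(@unzip2_zip _ _ t (rot 1 t)) ?size_rot //.
by case/mapP => [[w y] H /= ->]; exists w.
Qed.

Lemma Z_succ t x : x \in t -> exists y, (x, y) \in Z t.
Proof.
rewrite -{1}(@unzip1_zip _ _ t (rot 1 t)) ?size_rot //.
by case/mapP => [[w y] H /= ->]; exists y.
Qed.

Lemma path_imp (P : pred X) s x :
  path (fun x y => P x ==> P y) x s -> P x -> all P s.
Proof.
elim: s x => [|y s IH] x //= /andP[/implyP H1 H2] Px.
by rewrite H1 //= (IH y H2 (H1 Px)).
Qed.

Lemma Z_prop (P : pred X) t x0 : x0 \in t ->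
  (forall x y, (x, y) \in Z t -> P x -> P y) -> P x0 -> forall x, x \in t -> P x.
Proof.
move=> Hx0 H P0.
have Hc : cycle (fun x y => P x ==> P y) t.
  by rewrite cycle_Z; apply/allP => [[x y]] /= Hxy; apply/implyP; apply: H Hxy.
case: (rot_to Hx0) => i s' Hrot.
rewrite -(rot_cycle i) Hrot /= in Hc.
have := path_imp Hc P0; rewrite all_rcons => /andP[_ /allP Hall] x.
rewrite -(mem_rot i) Hrot inE => /orP[/eqP -> //|]; exact: Hall.
Qed.

End Aux.

Section Main.
Variables (T : finType) (e : rel T).
Local Notation node := (node T).
Local Notation farc := (farc T).

Lemma matchingP m : matching e m ->
  (forall a, a \in m -> arc_ok e a) /\
  (forall a b, a \in m -> b \in m -> a != b -> (a.1 != b.1) && (a.2 != b.2)).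
Proof.
case/andP=> /forall_inP H1 /forall_inP H2; split=> // a b Ha Hb.
exact: (implyP (forall_inP (H2 a Ha) b Hb)).
Qed.

Lemma match1 m (a b : farc) : matching e m -> a \in m -> b \in m -> a.1 = b.1 -> a = b.
Proof.
move=> /matchingP[_ H] Ha Hb E; apply/eqP; apply/negPn/negP => /(H _ _ Ha Hb) /andP[].
by rewrite E eqxx.
Qed.

Lemma match2 m (a b : farc) : matching e m -> a \in m -> b \in m -> a.2 = b.2 -> a = b.
Proof.
move=> /matchingP[_ H] Ha Hb E; apply/eqP; apply/negPn/negP => /(H _ _ Ha Hb) /andP[_].
by rewrite E eqxx.
Qed.

Lemma matching_sub (m m' : {set farc}) : m' \subset m -> matching e m -> matching e m'.
Proof.
move=> /subsetP S /andP[/forall_inP H1 /forall_inP H2]; apply/andP; split.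
- by apply/forall_inP => a /S; exact: H1.
- apply/forall_inP => a Ha; apply/forall_inP => b Hb.
  exact: (forall_inP (H2 a (S _ Ha)) b (S _ Hb)).
Qed.

Lemma two_elem (p q v u v' : T) : v \in [set p; q] -> u \in [set p; q] ->
  v' \in [set p; q] -> v != u -> v' != u -> v = v'.
Proof.
rewrite !in_set2; case/orP=>/eqP->; case/orP=>/eqP->; case/orP=>/eqP->;
  by rewrite ?eqxx.
Qed.

Lemma dedgeZ m t x y : cycle (dedge e m) t -> (x, y) \in Z t -> dedge e m x y.
Proof. by rewrite cycle_Z => /allP H /H. Qed.

Lemma det m (t1 t2 : seq node) x y y' : matching e m ->
  cycle (dedge e m) t1 -> cycle (dedge e m) t2 ->
  (x, y) \in Z t1 -> (x, y') \in Z t2 -> y = y'.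
Proof.
move=> Hm C1 C2 H1 H2.
have [w Hw] := Z_pred (Z_fst H1).
have [w' Hw'] := Z_pred (Z_fst H2).
have D1 := dedgeZ C1 H1; have D2 := dedgeZ C2 H2.
have D3 := dedgeZ C1 Hw; have D4 := dedgeZ C2 Hw'.
case: x H1 H2 Hw Hw' D1 D2 D3 D4 => [v|s] H1 H2 Hw Hw'.
- case: y H1 => [v2|s] //= H1 /andP[_ Hs].
  case: y' H2 => [v3|s'] //= H2 /andP[_ Hs'] _ _.
  by have [->] := match2 Hm Hs Hs' erefl.
- case: y H1 => [v|s2] H1 //=; case: y' H2 => [v'|s3] H2 //=.
  case: w Hw => [u|?] Hw //=; case: w' Hw' => [u'|?] Hw' //=.
  move=> /andP[/andP[Hes Hv] Hv1] /andP[/andP[_ Hv'] Hv1'] /andP[/andP[_ Hu] Hu1]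
    /andP[/andP[_ Hu'] Hu1'].
  have [Eu] := match1 Hm Hu1 Hu1' erefl; subst u'.
  case/existsP: Hes => p /existsP[q /andP[_ /eqP Es]].
  simpl in Es, Hv, Hv', Hu; rewrite {}Es in Hv Hv' Hu.
  have Nv : v != u by apply: contraNneq Hv1 => ->.
  have Nv' : v' != u by apply: contraNneq Hv1' => ->.
  by rewrite (two_elem Hv Hu Hv' Nv Nv').
Qed.

Lemma joinsP (a : farc) (x y : node) : joins a x y ->
  (x = inr a.1 /\ y = inl a.2) \/ (x = inl a.2 /\ y = inr a.1).
Proof. by case/orP => /andP[/eqP -> /eqP ->]; [left|right]. Qed.

Lemma in_arcs (a : farc) (t : seq node) :
  a \in cycle_arcs t -> exists x y, (x, y) \in Z t /\ joins a x y.
Proof. by rewrite inE => /hasP[[x y] H J]; exists x, y. Qed.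

Lemma arcs_node (a : farc) (t : seq node) : a \in cycle_arcs t -> (inl a.2 : node) \in t.
Proof.
case/in_arcs => x [y [H /joinsP [[_ E]|[E _]]]]; subst.
- exact: Z_snd H.
- exact: Z_fst H.
Qed.

Lemma uniqC m (t1 t2 : seq node) a : matching e m ->
  cycle (dedge e m) t1 -> cycle (dedge e m) t2 ->
  a \in cycle_arcs t1 -> a \in cycle_arcs t2 -> cycle_arcs t1 \subset cycle_arcs t2.
Proof.
move=> Hm C1 C2 A1 A2.
have Hsub : forall x, x \in t1 -> x \in t2.
  apply: (Z_prop (P := fun x => x \in t2) (arcs_node A1)); last exact: arcs_node A2.
  move=> x y H Hx; have [y' H'] := Z_succ Hx.
  by rewrite (det Hm C1 C2 H H'); exact: Z_snd H'.
apply/subsetP => b /in_arcs [x [y [H Jb]]].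
have [y' H'] := Z_succ (Hsub _ (Z_fst H)).
rewrite (det Hm C1 C2 H H') in Jb.
by rewrite inE; apply/hasP; exists (x, y').
Qed.

Lemma dcycle_ex m C : is_dcycle e m C ->
  exists t : seq node, cycle (dedge e m) t /\ C = cycle_arcs t.
Proof. by case/existsP => n /existsP [t /and4P [_ _ Hc /eqP ->]]; exists t. Qed.

Lemma uniqCyc m C1 C2 a : matching e m -> is_dcycle e m C1 -> is_dcycle e m C2 ->
  a \in C1 -> a \in C2 -> C1 = C2.
Proof.
move=> Hm /dcycle_ex[t1 [H1 ->]] /dcycle_ex[t2 [H2 ->]] A1 A2.
by apply/eqP; rewrite eqEsubset (uniqC Hm H1 H2 A1 A2) (uniqC Hm H2 H1 A2 A1).
Qed.


Lemma cycR m (a : farc) (t : seq node) : matching e m -> a \in m ->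
  cycle (dedge e (m :\ a)) t = cycle (dedge e m) t && (a \notin cycle_arcs t).
Proof.
move=> Hm Ha; apply/idP/idP.
- move=> C; have Hp : forall x y, (x, y) \in Z t -> dedge e m x y && ~~ joins a x y.
    move=> x y H; have D := dedgeZ C H.
    case: x y H D => [v|s] [v'|s'] H //=.
    + rewrite in_setD1 => /andP[Hok /andP[Hne Hin]]; rewrite Hok Hin /=.
      apply/negP => /joinsP [[]|[[Ev] [Es]]] //.
      by move: Hne; rewrite Es Ev -surjective_pairing eqxx.
    + move=> /andP[Hok Hn].
      have [w Hw] := Z_pred (Z_fst H); have D := dedgeZ C Hw.
      case: w Hw D => [u|?] Hw //= /andP[_]; rewrite in_setD1 => /andP[Hua Hu].
      have Hsv : (s, v') \notin m.
        apply/negP => Hin; move: Hn; rewrite in_setD1 Hin andbT negbK => /eqP Ea.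
        subst a; by rewrite (match1 Hm Hu Ha erefl) eqxx in Hua.
      rewrite Hok Hsv /=; apply/negP => /joinsP [[[Es] [Ev]]|[]] //.
      by move: Hsv; rewrite Es Ev -surjective_pairing Ha.
  apply/andP; split.
  + by rewrite cycle_Z; apply/allP => [[x y]] /Hp /andP[].
  + by rewrite inE; apply/hasPn => [[x y]] /Hp /andP[].
- case/andP => C; rewrite inE => /hasPn Hn.
  rewrite cycle_Z; apply/allP => [[x y]] H /=.
  have D := dedgeZ C H; have Nj := Hn _ H; simpl in Nj.
  case: x y H D Nj => [v|s] [v'|s'] H //=.
  + move=> /andP[Hok Hin] Nj; rewrite Hok in_setD1 Hin andbT /=.
    apply: contra Nj => /eqP Ea; subst a; by rewrite /joins /= !eqxx.
  + by move=> /andP[Hok Hn'] _; rewrite Hok in_setD1 (negbTE Hn') andbF.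
Qed.

Lemma delR m (a : farc) C : matching e m -> a \in m ->
  is_dcycle e (m :\ a) C = is_dcycle e m C && (a \notin C).
Proof.
move=> Hm Ha; apply/idP/idP.
- case/existsP => n /existsP [t /and4P [Hn0 Hu Hc /eqP HC]].
  rewrite (cycR _ Hm Ha) in Hc; case/andP: Hc => Hc Hna.
  rewrite HC Hna andbT; apply/existsP; exists n; apply/existsP; exists t.
  by rewrite Hn0 Hu Hc eqxx.
- case/andP => /existsP [n /existsP [t /and4P [Hn0 Hu Hc /eqP HC]]] Hna.
  rewrite HC in Hna; apply/existsP; exists n; apply/existsP; exists t.
  by rewrite Hn0 Hu (cycR _ Hm Ha) Hc Hna HC eqxx.
Qed.

Definition onC m (a : farc) := [exists C, is_dcycle e m C && (a \in C)].

Lemma Jdel m (a : farc) : matching e m -> a \in m -> J e m = (J e (m :\ a) + onC m a)%N.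
Proof.
move=> Hm Ha; rewrite /J -(cardsID [set C : {set farc} | a \in C] [set C : {set farc} | is_dcycle e m C]) addnC.
congr (_ + _)%N.
- apply: eq_card => C; rewrite !inE (delR _ Hm Ha); by rewrite andbC.
- case: (boolP (onC m a)) => [/existsP [C0 /andP [Hn0 A0]]|Hn].
  + have -> : [set C : {set farc} | is_dcycle e m C] :&: [set C : {set farc} | a \in C] = [set C0].
      apply/setP => C; rewrite !inE; apply/idP/idP.
      * by case/andP => HC Acc; rewrite (uniqCyc Hm HC Hn0 Acc A0).
      * by move/eqP ->; rewrite Hn0 A0.
    by rewrite cards1.
  + have -> : [set C : {set farc} | is_dcycle e m C] :&: [set C : {set farc} | a \in C] = set0.
      apply/setP => C; rewrite !inE; move/existsPn: Hn => /(_ C) /negbTE ->.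
      by [].
    by rewrite cards0.
Qed.

Lemma sym m (a b : farc) : matching e m -> a \in m -> b \in m :\ a ->
  onC m a -> onC (m :\ a) b -> onC m b && onC (m :\ b) a.
Proof.
move=> Hm Ha Hb /existsP [Ca /andP [Hca Aa]] /existsP [C /andP [HC Bc]].
have Hb' : b \in m by move: Hb; rewrite in_setD1 => /andP[].
rewrite (delR _ Hm Ha) in HC; case/andP: HC => HC Nac.
apply/andP; split; apply/existsP.
- by exists C; rewrite HC Bc.
- exists Ca; rewrite Aa andbT (delR _ Hm Hb') Hca /=.
  apply/negP => Bca; have E := uniqCyc Hm Hca HC Bca Bc.
  by subst; rewrite Aa in Nac.
Qed.

End Main.

Section Main2.
Variables (T : finType) (e : rel T).
Local Notation farc := (farc T).

Definition fd (tau sigma : {set farc}) :=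
  codim1_face e tau sigma && (J e tau != J e sigma).

Lemma fd_info tau sigma : fd tau sigma ->
  exists2 a, a \in sigma &
   [/\ tau = sigma :\ a, onC e sigma a, matching e sigma, simplex e sigma & simplex e tau].
Proof.
case/andP => /andP[/andP[Hs Ht] /exists_inP [a Ha /eqP Et]] HJ.
exists a => //; have Hm : matching e sigma by case/andP: Hs.
split => //; move: HJ; rewrite (Jdel Hm Ha) Et.
by case: (onC e sigma a); rewrite ?addn0 ?eqxx.
Qed.

Lemma fd_mk sigma a : simplex e sigma -> a \in sigma -> onC e sigma a ->
  sigma :\ a != set0 -> fd (sigma :\ a) sigma.
Proof.
move=> Hs Ha Ho Hne; have Hm : matching e sigma by case/andP: Hs.
rewrite /fd /codim1_face Hs /simplex (matching_sub (subsetDl _ _) Hm) Hne /=.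
rewrite (Jdel Hm Ha) Ho addn1 neq_ltn ltnSn /= andbT.
by apply/exists_inP; exists a.
Qed.

Lemma inner sigma rho : simplex e sigma ->
  \sum_(tau | simplex e tau) (fd tau sigma)%:R * (fd rho tau)%:R = 0 :> 'F_2.
Proof.
move=> Hs.
case: (boolP [exists tau, [&& simplex e tau, fd tau sigma & fd rho tau]]).
- case/existsP => tau1 /and3P [Ht1 F1 F2].
  have [a Ha [Et1 Oa Hm _ _]] := fd_info F1.
  have [b Hb [Er Ob Hm1 _ Hr]] := fd_info F2.
  have Hbs : b \in sigma by move: Hb; rewrite Et1 in_setD1 => /andP[].
  have Hba : b != a by move: Hb; rewrite Et1 in_setD1 => /andP[].
  rewrite Et1 in Ob Hb.
  have /andP[Ob' Oa'] := sym Hm Ha Hb Oa Ob.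
  set tau2 := sigma :\ b.
  have Hm2 : matching e tau2 by apply: matching_sub (subsetDl _ _) Hm.
  have Ha2 : a \in tau2 by rewrite in_setD1 eq_sym Hba.
  have Ne2 : tau2 != set0 by apply/set0Pn; exists a.
  have F3 : fd tau2 sigma by apply: fd_mk.
  have Er2 : rho = tau2 :\ a.
    by rewrite Er Et1; apply/setP => x; rewrite !inE andbCA.
  have Ht2 : simplex e tau2 by rewrite /simplex Hm2 Ne2.
  have F4 : fd rho tau2.
    by rewrite Er2; apply: fd_mk => //; rewrite -Er2; case/andP: Hr.
  have N12 : tau2 != tau1 by apply/negP => /eqP E; move: Ha2; rewrite E Et1 !inE eqxx.
  rewrite (bigD1 tau1) // (bigD1 tau2) /=; last by rewrite Ht2 N12.
  rewrite F1 F2 F3 F4 big1 /=.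
    by rewrite mulr1 addr0; apply/eqP.
  move=> tau /andP[/andP[Ht Nt1] Nt2].
  case: (boolP (fd tau sigma && fd rho tau)) => [/andP[G1 G2]|].
  + have [a' Ha' [Et _ _ _ _]] := fd_info G1.
    have [b' Hb' [Er' _ _ _ _]] := fd_info G2.
    have : a' \notin rho by rewrite Er' Et !inE eqxx /= andbF.
    rewrite Er Et1 !inE Ha' andbT negb_and !negbK => /orP[] /eqP E; subst a'.
    * by rewrite Et /tau2 eqxx in Nt2.
    * by rewrite Et Et1 eqxx in Nt1.
  + by case: (fd tau sigma) => /=; case: (fd rho tau); rewrite ?mulr0 ?mul0r.
- move/existsPn => H; apply: big1 => tau Ht.
  move: (H tau); rewrite Ht /=.
  by case: (fd tau sigma) => /=; case: (fd rho tau); rewrite ?mulr0 ?mul0r.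
Qed.

End Main2.

Theorem mainTheorem6 (T : finType) (e : rel T)
    (e_sym : symmetric e) (e_irr : irreflexive e) :
  (* J drops by exactly one when it drops on a codimension-one face *)
  (forall sigma tau : {set farc T}, codim1_face e tau sigma ->
     (J e tau < J e sigma)%N -> J e tau = (J e sigma).-1)
  /\
  (* hence partial_d has bidegree (-1,-1): a chain concentrated in
     \hat C_i^j is sent into \hat C_{i-1}^{j-1} *)
  (forall (i j : nat) (c : chain T),
     is_chain e c ->
     (forall s, c s != 0 -> #|s| = i.+1 /\ J e s = j) ->
     forall tau, bd_d e c tau != 0 -> #|tau| = i /\ (J e tau).+1 = j)
  /\
  (* partial_d o partial_d = 0 *)
  (forall c : chain T, is_chain e c -> bd_d e (bd_d e c) = 0).
Proof.
split; [|split].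
- move=> sigma tau /andP[/andP[Hs Ht] /exists_inP[a Ha /eqP Et]] Hlt.
  have Hm : matching e sigma by case/andP: Hs.
  rewrite (Jdel Hm Ha) -Et in Hlt *.
  by case: (onC e sigma a) Hlt; rewrite ?addn1 ?addn0 // ltnn.
- move=> i j c _ Hc tau; rewrite ffunE.
  case: (boolP [exists sigma, simplex e sigma &&
      (c sigma * (fd e tau sigma)%:R != 0)]).
  + case/existsP => sigma /andP[Hsig Hterm] _.
    move: Hterm; case: (boolP (fd e tau sigma)) => Hb; rewrite /= ?mulr1 ?mulr0 ?eqxx // => Hcs.
    have [a Ha [Et Oa Hm _ _]] := fd_info Hb.
    have [Hcard HJ] := Hc _ Hcs.
    split.
    * by move: Hcard; rewrite (cardsD1 a) Ha -Et add1n => [[]].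
    * by rewrite -HJ (Jdel Hm Ha) -Et Oa addn1.
  + move=> /existsPn H; rewrite big1 ?eqxx // => sigma Hsig.
    by move: (H sigma); rewrite Hsig /= => /negPn/eqP.
- move=> c _; apply/ffunP => rho; rewrite !ffunE.
  under eq_bigr => tau _ do rewrite ffunE big_distrl /=.
  rewrite exchange_big /= big1 // => sigma Hsig.
  rewrite (eq_bigr (fun tau => c sigma * ((fd e tau sigma)%:R * (fd e rho tau)%:R))).
    by rewrite -big_distrr /= (inner rho Hsig) mulr0.
  by move=> tau _; rewrite mulrA.
Qed.
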